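(* Let $l,m,p,q\in\mathbb{N}$, $f\in\mathrm{Hom}_\Omega([l],[p])$, $g\in\mathrm{Hom}_\Omega([m],[q])$ and let $H\in G[l]$, $K\in G[m]$. Then, for $\varrho\in C(H)$, $\varsigma\in C(K)$, $(f\smile g)_{H\smile K*}(\varrho\smile\varsigma)=f_{H*}(\varrho)\smile g_{K*}(\varsigma)$.
   Context: $\Omega$ is the category of finite ordinals $[l]=\{0,\dots,l-1\}$ and all functions; for $f:[l]\to[p]$, $g:[m]\to[q]$, $f\smile g:[l+m]\to[p+q]$ is $f\smile g(i)=f(i)$ for $i\in[l]$ and $g(i-l)+p$ for $i\in[m]+l$. $G[l]$ is the set of hypergraphs on $[l]$ (sets of non empty subsets of $[l]$), $Gf(H)=\{f(X)\mid X\in H\}$, and $H\smile K=H\cup(K+l)$ with $K+l=\{X+l\mid X\in K\}$. Fix finite additive commutative monoids $\mathsf{A}$, $\mathsf{M}$. For finite $X\subset\mathbb{N}$, $\mathsf{A}^X$ is the monoid of functions $X\to\mathsf{A}$; for $f:X\to Y$, $f_\star(w)(s)=\sum_{r\in X,f(r)=s}w(r)$; for $\varpi:\mathsf{A}^X\to\mathsf{M}$, $f_*(\varpi)(v)=\sum_{w\in\mathsf{A}^X,f_\star(w)=v}\varpi(w)$. A calibration $\varrho\in C(H)$ assigns to each $X\in H$ a function $\varrho_X:\mathsf{A}^X\to\mathsf{M}$. For $f\in\mathrm{Hom}_\Omega([l],[m])$, $f_{H*}:C(H)\to C(Gf(H))$ is $f_{H*}(\varrho)_Y=\sum_{X\in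 H,f(X)=Y}f|_{X*}(\varrho_X)$. With $t_{Xl}(r)=r-l$ on $X\subset\mathbb{N}+l$, the calibration monadic product is $(\varrho\smile\varsigma)_X=\varrho_X$ for $X\in H$ and $\varsigma_{X-l}\circ t_{Xl\star}$ for $X\in K+l$. *)

(* Defs.v *)
From HB Require Import structures.
From mathcomp Require Import all_boot all_order all_algebra.
Set Implicit Arguments. Unset Strict Implicit. Unset Printing Implicit Defensive.
Import GRing.Theory.
Local Open Scope ring_scope.

(* Finite ordinal [l] is 'I_l; a subset X of [l] is a {set 'I_l};
   the elements of X form the finite type [elt X]. *)
Definition elt (l : nat) (X : {set 'I_l}) := {x : 'I_l | x \in X}.

Definition funs (A : finNmodType) (l : nat) (X : {set 'I_l}) :=
  {ffun elt X -> A}.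

Definition hypergraph (l : nat) (H : {set {set 'I_l}}) : bool := set0 \notin H.

Definition osmile (l m p q : nat) (f : 'I_l -> 'I_p) (g : 'I_m -> 'I_q)
  : 'I_(l + m) -> 'I_(p + q) :=
  fun i => match split i with
           | inl a => lshift q (f a)
           | inr b => rshift p (g b)
           end.

Definition Gmap (l p : nat) (f : 'I_l -> 'I_p) (H : {set {set 'I_l}})
  : {set {set 'I_p}} := [set f @: X | X : {set 'I_l} in H].

Definition Gsmile (l m : nat) (H : {set {set 'I_l}}) (K : {set {set 'I_m}})
  : {set {set 'I_(l + m)}} :=
  [set (@lshift l m) @: X | X : {set 'I_l} in H] :|: [set (@rshift l m) @: X | X : {set 'I_m} in K].

Section Calib.
Variables (A : finNmodType) (M : nmodType).

(* Pushforward of w : A^X along a map phi : X -> Y given by its graph on the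
   underlying points:  phi_star(w)(s) = sum_{r in X, phi(r) = s} w(r). *)
Definition fstar (a b : nat) (R : 'I_a -> 'I_b -> bool)
  (X : {set 'I_a}) (Y : {set 'I_b}) (w : funs A X) : funs A Y :=
  [ffun s : elt Y => \sum_(r : elt X | R (val r) (val s)) w r].
Arguments fstar {a b} R X Y w.

Definition fpush (a b : nat) (R : 'I_a -> 'I_b -> bool)
  (X : {set 'I_a}) (Y : {set 'I_b}) (varpi : funs A X -> M) : funs A Y -> M :=
  fun v => \sum_(w : funs A X | fstar R X Y w == v) varpi w.
Arguments fpush {a b} R X Y varpi v.

(* Calibrations: to each X a function A^X -> M (only the values at X in H
   are meaningful for a calibration of H). *)
Definition calib (l : nat) := forall X : {set 'I_l}, funs A X -> M.

Definition cpush (l p : nat) (f : 'I_l -> 'I_p) (H : {set {set 'I_l}})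
  (rho : calib l) (Y : {set 'I_p}) (v : funs A Y) : M := \sum_(X in H | f @: X == Y)
               fpush (fun i j => f i == j) X Y (rho X) v.
Arguments cpush {l p} f H rho Y v.

Definition csmile (l m : nat) (H : {set {set 'I_l}})
  (rho : calib l) (sigma : calib m) (X : {set 'I_(l + m)}) (w : funs A X) : M :=
    if X \in [set (@lshift l m) @: Y | Y : {set 'I_l} in H] then
      rho [set i : 'I_l | lshift m i \in X]
          (fstar (fun (r : 'I_(l + m)) (s : 'I_l) => val r == val s) X _ w)
    else
      sigma [set j : 'I_m | rshift l j \in X]
            (fstar (fun (r : 'I_(l + m)) (s : 'I_m) => (val r - l)%N == val s) X _ w).
Arguments csmile {l m} H rho sigma X w.

End Calib.

Arguments fstar {A a b} R X Y w.
Arguments fpush {A M a b} R X Y varpi v.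
Arguments cpush {A M l p} f H rho Y v.
Arguments csmile {A M l m} H rho sigma X w.

(* Main.v *)
Require Import Defs.
From HB Require Import structures.
From mathcomp Require Import all_boot all_order all_algebra.
Set Implicit Arguments. Unset Strict Implicit. Unset Printing Implicit Defensive.
Import GRing.Theory.
Local Open Scope ring_scope.

Definition brel a b (E : 'I_a -> 'I_b -> bool) (X : {set 'I_a}) (Y : {set 'I_b}) :=
 [/\ forall r : elt X, exists s : elt Y, E (val r) (val s),
     forall s : elt Y, exists r : elt X, E (val r) (val s),
     forall (r : elt X) (s1 s2 : elt Y), E (val r) (val s1) -> E (val r) (val s2) -> s1 = s2 &
     forall (r1 r2 : elt X) (s : elt Y), E (val r1) (val s) -> E (val r2) (val s) -> r1 = r2].

Lemma brelT a b E (X : {set 'I_a}) (Y : {set 'I_b}) :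
  brel E X Y -> brel (fun i j => E j i) Y X.
Proof. by case=> h1 h2 h3 h4; split=> // r s1 s2; [apply: h4 | apply: h3]. Qed.

Section G.
Variables (A : finNmodType) (M : nmodType).

Lemma fstar_inv a b E (X : {set 'I_a}) (Y : {set 'I_b}) (w : funs A X) :
  brel E X Y -> fstar (fun i j => E j i) Y X (fstar E X Y w) = w.
Proof.
case=> h1 h2 h3 h4; apply/ffunP => r; rewrite ffunE.
have [x0 Hx0] := h1 r.
rewrite (big_pred1 x0); last first.
  by move=> s /=; apply/idP/eqP => [Hs|->//]; apply: h3 Hs Hx0.
rewrite ffunE (big_pred1 r) //.
by move=> s /=; apply/idP/eqP => [Hs|->//]; apply: h4 Hs Hx0.
Qed.

Lemma fstar_nat a a' b b' E E2 R S (X' : {set 'I_a}) (X : {set 'I_a'})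
  (Y : {set 'I_b}) (Y1 : {set 'I_b'}) (w' : funs A X') :
  brel E X' X -> brel E2 Y Y1 ->
  (forall (r : elt X') (x : elt X) (y : elt Y) (t : elt Y1),
     E (val r) (val x) -> E2 (val y) (val t) -> R (val r) (val y) = S (val x) (val t)) ->
  fstar E2 Y Y1 (fstar R X' Y w') = fstar S X Y1 (fstar E X' X w').
Proof.
case=> h1 h2 h3 h4 [k1 k2 k3 k4] hc; apply/ffunP => t; rewrite !ffunE.
have [y0 Hy0] := k2 t.
rewrite (big_pred1 y0); last first.
  by move=> s /=; apply/idP/eqP => [Hs|->//]; apply: k4 Hs Hy0.
rewrite /fstar ffunE.
rewrite (eq_bigr (fun x => \sum_(r0 | E (val r0) (val x)) w' r0)); last by move=> x _; rewrite ffunE.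
rewrite (exchange_big_dep xpredT) //= big_mkcond /=.
apply: eq_bigr => r _.
have [x0 Hx0] := h1 r.
rewrite (hc r x0 y0 t Hx0 Hy0).
case Hs: (S (val x0) (val t)).
  rewrite (big_pred1 x0) // => s /=; apply/andP/eqP => [[_ Hs']|->//].
  by apply: h3 Hs' Hx0.
rewrite big_pred0 // => s /=; apply/andP => [[Hs' He]].
by rewrite (h3 _ _ _ He Hx0) Hs in Hs'.
Qed.

Lemma fpush_relabel a a' b b' E E2 R S (X' : {set 'I_a}) (X : {set 'I_a'})
  (Y : {set 'I_b}) (Y1 : {set 'I_b'}) (phi : funs A X -> M) (w : funs A Y) :
  brel E X' X -> brel E2 Y Y1 ->
  (forall (r : elt X') (x : elt X) (y : elt Y) (t : elt Y1),
     E (val r) (val x) -> E2 (val y) (val t) -> R (val r) (val y) = S (val x) (val t)) ->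
  \sum_(w' : funs A X' | fstar R X' Y w' == w) phi (fstar E X' X w')
  = fpush S X Y1 phi (fstar E2 Y Y1 w).
Proof.
move=> hE hE2 hc; rewrite /fpush.
rewrite (reindex (fstar E X' X)) /=; last first.
  exists (fstar (fun i j => E j i) X X') => u _; first exact: fstar_inv.
  exact: (fstar_inv u (brelT hE)).
apply: eq_bigl => w' /=.
rewrite -(fstar_nat w' hE hE2 hc).
apply/eqP/eqP => [->//|Heq].
by rewrite -(fstar_inv (fstar R X' Y w') hE2) Heq fstar_inv.
Qed.
End G.

Lemma brel_lshift n k (Z : {set 'I_n}) :
  brel (fun (r : 'I_(n + k)) (s : 'I_n) => val r == val s) (lshift k @: Z) Z.
Proof.
split.
- move=> [r Hr]; case/imsetP: (Hr) => z Hz e; exists (exist _ z Hz) => /=.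
  by rewrite e.
- move=> [z Hz]; exists (exist _ (lshift k z) (imset_f _ Hz)) => /=. by [].
- move=> r [s1 h1] [s2 h2] /= /eqP e1 /eqP e2; apply: val_inj; apply: val_inj => /=.
  by rewrite -e1 -e2.
- move=> [r1 h1] [r2 h2] s /= /eqP e1 /eqP e2; apply: val_inj; apply: val_inj => /=.
  by rewrite e1 e2.
Qed.

Lemma brel_rshift n k (Z : {set 'I_k}) :
  brel (fun (r : 'I_(n + k)) (s : 'I_k) => (val r - n)%N == val s) (@rshift n k @: Z) Z.
Proof.
split.
- move=> [r Hr]; case/imsetP: (Hr) => z Hz e; exists (exist _ z Hz) => /=.
  by rewrite e /= addKn.
- move=> [z Hz]; exists (exist _ (rshift n z) (imset_f _ Hz)) => /=.
  by rewrite addKn.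
- move=> r [s1 h1] [s2 h2] /= /eqP e1 /eqP e2; apply: val_inj; apply: val_inj => /=.
  by rewrite -e1 -e2.
- move=> [r1 h1] [r2 h2] s /=.
  case/imsetP: (h1) => z1 _ E1; case/imsetP: (h2) => z2 _ E2.
  move=> /eqP e1 /eqP e2; apply: val_inj => /=.
  move: e1 e2; rewrite E1 E2 /= !addKn => e1 e2.
  by congr rshift; apply: val_inj; exact: (etrans e1 (esym e2)).
Qed.

Lemma lr_disj n k (Z1 : {set 'I_n}) (Z2 : {set 'I_k}) z :
  z \in Z1 -> lshift k @: Z1 != @rshift n k @: Z2.
Proof.
move=> Hz; apply/eqP => e.
have : lshift k z \in @rshift n k @: Z2 by rewrite -e imset_f.
case/imsetP => y _ /eqP; by rewrite eq_lrshift.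
Qed.

Lemma rl_disj n k (Z1 : {set 'I_n}) (Z2 : {set 'I_k}) z :
  z \in Z2 -> @rshift n k @: Z2 != lshift k @: Z1.
Proof.
move=> Hz; apply/eqP => e.
have : rshift n z \in lshift k @: Z1 by rewrite -e imset_f.
case/imsetP => y _ /eqP; by rewrite eq_rlshift.
Qed.

Section C.
Variables (A : finNmodType) (M : nmodType).

Lemma csmile_l l m (H : {set {set 'I_l}}) (rho : calib A M l) (sigma : calib A M m) (X : {set 'I_l}) :
  X \in H -> forall w, csmile H rho sigma (lshift m @: X) w
    = rho X (fstar (fun (r : 'I_(l + m)) (s : 'I_l) => val r == val s) (lshift m @: X) X w).
Proof.
move=> HX w; rewrite /csmile.
have -> : (lshift m @: X \in [set lshift m @: Y | Y : {set 'I_l} in H]) = true.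
  by apply/imsetP; exists X.
have -> // : [set i | lshift m i \in lshift m @: X] = X.
apply/setP => i; rewrite inE mem_imset //; exact: lshift_inj.
Qed.

Lemma csmile_r l m (H : {set {set 'I_l}}) (rho : calib A M l) (sigma : calib A M m) (X : {set 'I_m}) z :
  z \in X -> forall w, csmile H rho sigma (@rshift l m @: X) w
    = sigma X (fstar (fun (r : 'I_(l + m)) (s : 'I_m) => (val r - l)%N == val s) (@rshift l m @: X) X w).
Proof.
move=> Hz w; rewrite /csmile.
have -> : (@rshift l m @: X \in [set lshift m @: Y | Y : {set 'I_l} in H]) = false.
  apply/imsetP => [[Z _ eZ]]; by move: (rl_disj Z Hz); rewrite eZ eqxx.
have -> // : [set i | rshift l i \in @rshift l m @: X] = X.
apply/setP => i; rewrite inE mem_imset //; exact: rshift_inj.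
Qed.
End C.

Lemma osmile_l l m p q (f : 'I_l -> 'I_p) (g : 'I_m -> 'I_q) i :
  osmile f g (lshift m i) = lshift q (f i).
Proof.
rewrite /osmile; case: splitP => [j /= e|j /= e].
  by congr lshift; congr f; apply: val_inj.
by have := ltn_ord i; rewrite e ltnNge leq_addr.
Qed.

Lemma osmile_r l m p q (f : 'I_l -> 'I_p) (g : 'I_m -> 'I_q) i :
  osmile f g (rshift l i) = rshift p (g i).
Proof.
rewrite /osmile; case: splitP => [j /= e|j /= /eqP]; last first.
  by rewrite eqn_add2l => /eqP e; congr rshift; congr g; apply: val_inj.
by have := ltn_ord j; rewrite -e leqNgt leq_addr.
Qed.

Lemma imset_osl l m p q (f : 'I_l -> 'I_p) (g : 'I_m -> 'I_q) (Z : {set 'I_l}) :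
  osmile f g @: (lshift m @: Z) = lshift q @: (f @: Z).
Proof. by rewrite -!imset_comp; apply: eq_imset => i /=; rewrite osmile_l. Qed.

Lemma imset_osr l m p q (f : 'I_l -> 'I_p) (g : 'I_m -> 'I_q) (Z : {set 'I_m}) :
  osmile f g @: (@rshift l m @: Z) = @rshift p q @: (g @: Z).
Proof. by rewrite -!imset_comp; apply: eq_imset => i /=; rewrite osmile_r. Qed.

Lemma nonempty_of l (H : {set {set 'I_l}}) Z : hypergraph H -> Z \in H -> exists z, z \in Z.
Proof.
move=> hH HZ; have : Z != set0 by apply: contraNneq hH => <-.
by case/set0Pn => z Hz; exists z.
Qed.

Theorem proposition3p24 (A : finNmodType) (M : finNmodType)
  (l m p q : nat) (f : 'I_l -> 'I_p) (g : 'I_m -> 'I_q)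
  (H : {set {set 'I_l}}) (K : {set {set 'I_m}})
  (hH : hypergraph H) (hK : hypergraph K)
  (rho : calib A M l) (sigma : calib A M m) :
  forall Y : {set 'I_(p + q)},
    Y \in Gmap (osmile f g) (Gsmile H K) ->
    cpush (osmile f g) (Gsmile H K) (csmile H rho sigma) Y
    =1 csmile (Gmap f H) (cpush f H rho) (cpush g K sigma) Y.
Proof.
move=> Y /imsetP [X' HX' ->].
case/setUP: HX' => /imsetP [X0 HX0 ->].
- rewrite imset_osl => w.
  have [x0 Hx0] := nonempty_of hH HX0.
  rewrite csmile_l; last by apply/imsetP; exists X0.
  rewrite /cpush.
  set Y1 := f @: X0.
  rewrite (eq_bigl (mem ((fun Z : {set 'I_l} => lshift m @: Z) @: [set Z in H | f @: Z == Y1]))); last first.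
    move=> X /=; apply/idP/idP.
    + case/andP => /setUP [] /imsetP [Z HZ ->] /eqP eq.
      * apply/imsetP; exists Z => //; rewrite inE HZ /=; apply/eqP.
        by move: eq; rewrite imset_osl; apply: (imset_inj (@lshift_inj _ _)).
      * have [z Hz] := nonempty_of hK HZ.
        have := @rl_disj p q Y1 _ _ (imset_f g Hz).
        by rewrite -(imset_osr f) eq eqxx.
    + case/imsetP => Z; rewrite inE => /andP [HZ /eqP eZ] ->.
      rewrite imset_osl eZ eqxx andbT; apply/setUP; left; exact: imset_f.
  rewrite big_imset /=; last by move=> Z1 Z2 _ _; apply: (imset_inj (@lshift_inj _ _)).
  apply: eq_big => [Z|Z]; first by rewrite inE.
  rewrite inE => /andP [HZ /eqP eZ].
  rewrite {1}/fpush (eq_bigr _ (fun w' _ => @csmile_l A M l m H rho sigma Z HZ w')).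
  apply: fpush_relabel; [exact: brel_lshift | exact: brel_lshift |].
  move=> [r Hr] [x Hx] [y Hy] [t Ht] /= e1 e2.
  have -> : r = lshift m x by apply: val_inj; exact/eqP.
  have -> : y = lshift q t by apply: val_inj; exact/eqP.
  by rewrite osmile_l eq_lshift.
- rewrite imset_osr => w.
  have [x0 Hx0] := nonempty_of hK HX0.
  rewrite (@csmile_r A M p q (Gmap f H) (cpush f H rho) (cpush g K sigma) _ _ (imset_f g Hx0)).
  rewrite /cpush.
  set Y1 := g @: X0.
  rewrite (eq_bigl (mem ((fun Z : {set 'I_m} => @rshift l m @: Z) @: [set Z in K | g @: Z == Y1]))); last first.
    move=> X /=; apply/idP/idP.
    + case/andP => /setUP [] /imsetP [Z HZ ->] /eqP eq.
      * have [z Hz] := nonempty_of hH HZ.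
        have := @lr_disj p q _ Y1 _ (imset_f f Hz).
        by rewrite -(imset_osl _ g) eq eqxx.
      * apply/imsetP; exists Z => //; rewrite inE HZ /=; apply/eqP.
        by move: eq; rewrite imset_osr; apply: (imset_inj (@rshift_inj _ _)).
    + case/imsetP => Z; rewrite inE => /andP [HZ /eqP eZ] ->.
      rewrite imset_osr eZ eqxx andbT; apply/setUP; right; exact: imset_f.
  rewrite big_imset /=; last by move=> Z1 Z2 _ _; apply: (imset_inj (@rshift_inj _ _)).
  apply: eq_big => [Z|Z]; first by rewrite inE.
  rewrite inE => /andP [HZ /eqP eZ].
  have [z Hz] := nonempty_of hK HZ.
  rewrite {1}/fpush (eq_bigr _ (fun w' _ => @csmile_r A M l m H rho sigma Z z Hz w')).
  apply: fpush_relabel; [exact: brel_rshift | exact: brel_rshift |].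
  move=> [r Hr] [x Hx] [y Hy] [t Ht] /= e1 e2.
  case/imsetP: (Hr) => r' _ Er; case/imsetP: (Hy) => y' _ Ey.
  move: e1 e2; rewrite Er Ey /= !addKn => e1 e2.
  have -> : r' = x by apply: val_inj; exact/eqP.
  have -> : y' = t by apply: val_inj; exact/eqP.
  by rewrite osmile_r eq_rshift.
Qed.
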